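(* Let $\{GM_n\}$ be the Gaussian Tetranacci numbers and $\{GR_n\}$ the Gaussian Tetranacci-Lucas numbers. Then for every integer $n\ge3$: $$(4-i)GM_{2n}-(9-4i)GM_{2n-2}-(6-7i)GM_{2n-4}+(1+i)GM_{2n-6}=(1+i)GR_{2n-2}+(1-i)GR_{2n-4}-iGR_{2n-6},$$ $$(1+4i)GM_{2n}+(4-9i)GM_{2n-2}+(2-6i)GM_{2n-4}+(1+i)GM_{2n-6}=(1+i)GR_{2n-1}+(1-i)GR_{2n-3}-iGR_{2n-5},$$ $$(4-i)GM_{2n+1}-(9-4i)GM_{2n-1}-(6-7i)GM_{2n-3}+(1+i)GM_{2n-5}=GR_{2n}-(1-i)GR_{2n-2}-(1-i)GR_{2n-4},$$ $$(1+4i)GM_{2n+1}+(4-9i)GM_{2n-1}+(2-6i)GM_{2n-3}+(1+i)GM_{2n-5}=GR_{2n+1}-(1-i)GR_{2n-1}-(1-i)GR_{2n-3}.$$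
   Context: The Gaussian Tetranacci numbers: $GM_0=0$, $GM_1=1$, $GM_2=1+i$, $GM_3=2+i$, $GM_n=GM_{n-1}+GM_{n-2}+GM_{n-3}+GM_{n-4}$ for $n\ge4$. The Gaussian Tetranacci-Lucas numbers: $GR_0=4-i$, $GR_1=1+4i$, $GR_2=3+i$, $GR_3=7+3i$, $GR_n=GR_{n-1}+GR_{n-2}+GR_{n-3}+GR_{n-4}$ for $n\ge4$. *)

(* Defs.v *)
From HB Require Import structures.
From mathcomp Require Import all_boot all_order all_algebra all_field.
Set Implicit Arguments. Unset Strict Implicit. Unset Printing Implicit Defensive.
Import Order.TTheory GRing.Theory Num.Theory.
Local Open Scope ring_scope.

Fixpoint GM (n : nat) : algC :=
  match n with
  | 0 => 0
  | 1 => 1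
  | 2 => 1 + 'i
  | 3 => 2 + 'i
  | ((((m.+1 as m1).+1 as m2).+1 as m3).+1) => GM m3 + GM m2 + GM m1 + GM m
  end.

Fixpoint GR (n : nat) : algC :=
  match n with
  | 0 => 4 - 'i
  | 1 => 1 + 4 * 'i
  | 2 => 3 + 'i
  | 3 => 7 + 3 * 'i
  | ((((m.+1 as m1).+1 as m2).+1 as m3).+1) => GR m3 + GR m2 + GR m1 + GR m
  end.

(* Main.v *)
Require Import Defs.
From HB Require Import structures.
From mathcomp Require Import all_boot all_order all_algebra all_field.
From mathcomp Require Import ring zify.
Import Order.TTheory GRing.Theory Num.Theory.
Local Open Scope ring_scope.

Lemma GMS0 k : GM (k.+4) = GM (k.+3) + GM (k.+2) + GM (k.+1) + GM k.
Proof. by []. Qed.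
Lemma GRS k : GR (k.+4) = GR (k.+3) + GR (k.+2) + GR (k.+1) + GR k.
Proof. by []. Qed.

Definition E1 k := (4 - 'i) * GM (k+6) - (9 - 4 * 'i) * GM (k+4) - (6 - 7 * 'i) * GM (k+2)
        + (1 + 'i) * GM k
      - ((1 + 'i) * GR (k+4) + (1 - 'i) * GR (k+2) - 'i * GR k).
Definition E2 k := (1 + 4 * 'i) * GM (k+6) + (4 - 9 * 'i) * GM (k+4) + (2 - 6 * 'i) * GM (k+2)
        + (1 + 'i) * GM k
      - ((1 + 'i) * GR (k+5) + (1 - 'i) * GR (k+3) - 'i * GR (k+1)).
Definition E3 k := (4 - 'i) * GM (k+6) - (9 - 4 * 'i) * GM (k+4) - (6 - 7 * 'i) * GM (k+2)
        + (1 + 'i) * GM k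
      - (GR (k+5) - (1 - 'i) * GR (k+3) - (1 - 'i) * GR (k+1)).
Definition E4 k := (1 + 4 * 'i) * GM (k+6) + (4 - 9 * 'i) * GM (k+4) + (2 - 6 * 'i) * GM (k+2)
        + (1 + 'i) * GM k
      - (GR (k+6) - (1 - 'i) * GR (k+4) - (1 - 'i) * GR (k+2)).

Lemma rec0 (f : nat -> algC) :
  (forall k, f k.+4 = f k.+3 + f k.+2 + f k.+1 + f k) ->
  f 0%N = 0 -> f 1%N = 0 -> f 2%N = 0 -> f 3%N = 0 -> forall k, f k = 0.
Proof.
move=> hS h0 h1 h2 h3.
suff H : forall k, [/\ f k = 0, f k.+1 = 0, f k.+2 = 0 & f k.+3 = 0].
  by move=> k; case: (H k).
elim=> [|k [a b c d]]; first by split.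
by split=> //; rewrite hS a b c d !addr0.
Qed.

Ltac base E := rewrite /E; cbv [addn addn_rec Nat.add]; simpl GM; simpl GR;
  ring: (@sqrCi algC).

Lemma E1z k : E1 k = 0.
Proof.
apply: rec0 => [j||||]; first by rewrite /E1 !addSn !GMS0 !GRS; ring.
all: base E1.
Qed.
Lemma E2z k : E2 k = 0.
Proof.
apply: rec0 => [j||||]; first by rewrite /E2 !addSn !GMS0 !GRS; ring.
all: base E2.
Qed.
Lemma E3z k : E3 k = 0.
Proof.
apply: rec0 => [j||||]; first by rewrite /E3 !addSn !GMS0 !GRS; ring.
all: base E3.
Qed.
Lemma E4z k : E4 k = 0.
Proof.
apply: rec0 => [j||||]; first by rewrite /E4 !addSn !GMS0 !GRS; ring.
all: base E4.
Qed.

Theorem mainTheorem19 (n : nat) (hn : (3 <= n)%N) :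
  [/\ (4 - 'i) * GM (2 * n) - (9 - 4 * 'i) * GM (2 * n - 2) - (6 - 7 * 'i) * GM (2 * n - 4)
        + (1 + 'i) * GM (2 * n - 6)
      = (1 + 'i) * GR (2 * n - 2) + (1 - 'i) * GR (2 * n - 4) - 'i * GR (2 * n - 6),
      (1 + 4 * 'i) * GM (2 * n) + (4 - 9 * 'i) * GM (2 * n - 2) + (2 - 6 * 'i) * GM (2 * n - 4)
        + (1 + 'i) * GM (2 * n - 6)
      = (1 + 'i) * GR (2 * n - 1) + (1 - 'i) * GR (2 * n - 3) - 'i * GR (2 * n - 5),
      (4 - 'i) * GM (2 * n + 1) - (9 - 4 * 'i) * GM (2 * n - 1) - (6 - 7 * 'i) * GM (2 * n - 3)
        + (1 + 'i) * GM (2 * n - 5)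
      = GR (2 * n) - (1 - 'i) * GR (2 * n - 2) - (1 - 'i) * GR (2 * n - 4) &
      (1 + 4 * 'i) * GM (2 * n + 1) + (4 - 9 * 'i) * GM (2 * n - 1) + (2 - 6 * 'i) * GM (2 * n - 3)
        + (1 + 'i) * GM (2 * n - 5)
      = GR (2 * n + 1) - (1 - 'i) * GR (2 * n - 1) - (1 - 'i) * GR (2 * n - 3)].
Proof.
set k := (2 * n - 6)%N.
have e0 : (2 * n = k + 6)%N by rewrite /k; lia.
have e1 : (2 * n + 1 = k.+1 + 6)%N by rewrite /k; lia.
have e2 : (2 * n - 1 = k + 5)%N by rewrite /k; lia.
have e3 : (2 * n - 2 = k + 4)%N by rewrite /k; lia.
have e4 : (2 * n - 3 = k + 3)%N by rewrite /k; lia.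
have e5 : (2 * n - 4 = k + 2)%N by rewrite /k; lia.
have e6 : (2 * n - 5 = k + 1)%N by rewrite /k; lia.
have e7 : (2 * n - 6 = k)%N by [].
have f1 : (k + 5 = k.+1 + 4)%N by lia.
have f2 : (k + 3 = k.+1 + 2)%N by lia.
have f3 : (k + 1 = k.+1)%N by lia.
have f4 : (k + 4 = k.+1 + 3)%N by lia.
have f5 : (k + 2 = k.+1 + 1)%N by lia.
rewrite e1 e2 e3 e4 e5 e6 e0.
split; apply/eqP; rewrite -subr_eq0; apply/eqP.
- exact: E1z.
- exact: E2z.
- move: (E3z k.+1); rewrite /E3 => <-; rewrite !addSn !addnS !addn0; ring.
- move: (E4z k.+1); rewrite /E4 => <-; rewrite !addSn !addnS !addn0; ring.
Qed.
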